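(* Let $q$ be a self-join-free Boolean conjunctive query, let $q_0\subseteq q$, and let $\mathbf{db}$ be a database. If $\mathbf{o}_1$ and $\mathbf{o}_2$ are garbage sets for $q_0$ in $\mathbf{db}$, then $\mathbf{o}_1\cup\mathbf{o}_2$ is a garbage set for $q_0$ in $\mathbf{db}$.
   Context: Every relation name has a signature $[n,k]$ ($1\le k\le n$; primary-key positions $1,\dots,k$) and a mode in $\{\mathsf{c},\mathsf{i}\}$. Facts are variable-free atoms; facts are key-equal if same relation name and same primary-key values. A database is a finite set of facts with no two distinct key-equal facts of mode $\mathsf{c}$, all of whose relation names occur in $q$. The block of a fact $A$ in $\mathbf{db}$ is the set of facts of $\mathbf{db}$ key-equal to $A$. A repair of a set of facts is a maximal subset without two distinct key-equal facts. A self-join-free Boolean conjunctive query is a finite set of atoms with distinct relation names; for a fact $A$, $\mathrm{atom}(A)$ is the atom of $q$ with the same relation name; valuations are extended as the identity on constants. A subset $\mathbf{o}\subseteq\mathbf{db}$ is a garbage set for $q_0$ in $\mathbf{db}$ if (1) for every $A\in\mathbf{o}$, $\mathrm{atom}(A)\in q_0$ and the block of $A$ in $\mathbf{db}$ is included in $\mathbf{o}$; and (2) there is a repair $\mathbf{r}$ of $\mathbf{o}$ such that for every valuation $\theta$ of the variables of $q$, if $\theta(q)\subseteq(\mathbf{db}\setminus\mathbf{o})\cup\mathbf{r}$ then $\theta(q_0)\cap\mathbf{r}=\emptyset$. *)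

(* Defs.v *)
From Stdlib Require Import List Arith.
Import ListNotations.
Set Implicit Arguments.

Inductive Mode := ModeC | ModeI.

Record Schema := {
  Rel : Type;
  arity : Rel -> nat;
  keylen : Rel -> nat;        (* k : primary-key positions 1..k *)
  mode : Rel -> Mode;
  keylen_pos : forall R, 1 <= keylen R;
  keylen_le : forall R, keylen R <= arity R
}.

Section Defs.
Variable S : Schema.
Variables Var Const : Type.

Inductive Term := TVar (x : Var) | TConst (c : Const).

Record Atom := { arel : Rel S; aargs : list Term }.
Definition wf_atom (a : Atom) : Prop := length (aargs a) = arity S (arel a).

Record Fact := { frel : Rel S; fargs : list Const }.
Definition wf_fact (A : Fact) : Prop := length (fargs A) = arity S (frel A).

Definition key_equal (A B : Fact) : Prop :=
  frel A = frel B /\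
  firstn (keylen S (frel A)) (fargs A) = firstn (keylen S (frel B)) (fargs B).

Definition sjf_query (q : list Atom) : Prop :=
  NoDup (map arel q) /\ Forall wf_atom q.

Definition subquery (q0 q : list Atom) : Prop := forall a, In a q0 -> In a q.

Definition fset := Fact -> Prop.
Definition fsubset (X Y : fset) : Prop := forall A, X A -> Y A.
Definition funion (X Y : fset) : fset := fun A => X A \/ Y A.

Definition database (q : list Atom) (db : fset) : Prop :=
  (exists l : list Fact, forall A, db A <-> In A l) /\
  (forall A, db A -> wf_fact A) /\
  (forall A B, db A -> db B -> mode S (frel A) = ModeC -> key_equal A B -> A = B) /\
  (forall A, db A -> exists a, In a q /\ arel a = frel A).

Definition consistent (X : fset) : Prop :=
  forall A B, X A -> X B -> key_equal A B -> A = B.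

Definition repair (o r : fset) : Prop :=
  fsubset r o /\ consistent r /\
  (forall r', fsubset r r' -> fsubset r' o -> consistent r' -> fsubset r' r).

Definition term_val (th : Var -> Const) (t : Term) : Const :=
  match t with TVar x => th x | TConst c => c end.
Definition atom_val (th : Var -> Const) (a : Atom) : Fact :=
  {| frel := arel a; fargs := map (term_val th) (aargs a) |}.

Definition val_in (th : Var -> Const) (q : list Atom) (X : fset) : Prop :=
  forall a, In a q -> X (atom_val th a).

(* atom(A) ∈ q0, where atom(A) is the atom of q with the relation name of A *)
Definition atom_in (q q0 : list Atom) (A : Fact) : Prop :=
  forall a, In a q -> arel a = frel A -> In a q0.

Definition garbage_set (q q0 : list Atom) (db o : fset) : Prop :=
  fsubset o db /\
  (forall A, o A ->
     atom_in q q0 A /\ (forall B, db B -> key_equal A B -> o B)) /\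
  (exists r, repair o r /\
     forall th : Var -> Const,
       val_in th q (funion (fun A => db A /\ ~ o A) r) ->
       forall a, In a q0 -> ~ r (atom_val th a)).

End Defs.

(* Main.v *)
Require Import Defs.
From Stdlib Require Import List Classical.

Theorem lemma15 (S : Schema) (Var Const : Type)
  (q q0 : list (Atom S Var Const)) (db o1 o2 : fset S Const) :
  sjf_query q -> subquery q0 q -> database q db ->
  garbage_set q q0 db o1 -> garbage_set q q0 db o2 ->
  garbage_set q q0 db (funion o1 o2).
Proof.
  intros _ Hsub _ [Hs1 [Hb1 [r1 [[Rs1 [Rc1 Rm1]] Hr1]]]] [Hs2 [Hb2 [r2 [[Rs2 [Rc2 Rm2]] Hr2]]]].
  assert (KS : forall A B : Fact S Const, key_equal A B -> key_equal B A).
  { intros A B [E1 E2]; split; auto. }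
  split; [|split].
  - intros A [H|H]; auto.
  - intros A [H|H].
    + destruct (Hb1 A H) as [H1 H2]; split; auto. intros B HB HK; left; eauto.
    + destruct (Hb2 A H) as [H1 H2]; split; auto. intros B HB HK; right; eauto.
  - exists (fun A => r1 A \/ (r2 A /\ ~ o1 A)).
    split; [split; [|split]|].
    + intros A [H|[H _]]; [left|right]; auto.
    + intros A B [HA|[HA NA]] [HB|[HB NB]] HK.
      * auto.
      * exfalso. apply NB. apply (proj2 (Hb1 A (Rs1 A HA))); auto.

      * exfalso. apply NA. apply (proj2 (Hb1 B (Rs1 B HB))); auto.

      * auto.
    + intros r' Hrr' Hr'o Hc C HC.
      destruct (classic (o1 C)) as [H1|H1].
      * left. apply (Rm1 (fun A => r' A /\ o1 A)); auto.
        -- intros A HA; split; auto.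
        -- intros A [_ HA]; auto.
        -- intros A B [HA _] [HB _]; auto.
      * right. split; auto.
        apply (Rm2 (fun A => r2 A \/ A = C)); auto.
        -- intros A HA; auto.
        -- intros A [HA|HA]; auto. subst A. destruct (Hr'o C HC); tauto.
        -- assert (HCo : db C /\ forall D, r2 D -> o1 D -> key_equal D C -> False).
           { destruct (Hr'o C HC) as [X|X]; [tauto|]. split; auto.
             intros D HD HD1 HK. apply H1. apply (proj2 (Hb1 D HD1)); auto. }
           destruct HCo as [HCd HCk].
           intros A B [HA|HA] [HB|HB] HK.
           ++ auto.
           ++ rewrite HB in *. destruct (classic (o1 A)) as [HA1|HA1].
              ** exfalso; eauto.
              ** apply Hc; auto; apply Hrr'; right; auto.
           ++ rewrite HA in *. destruct (classic (o1 B)) as [HB1|HB1].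
              ** exfalso; eauto.
              ** apply Hc; auto; apply Hrr'; right; auto.
           ++ rewrite HA, HB; auto.
    + intros th Hv.
      assert (N1 : forall a, In a q0 -> ~ r1 (atom_val th a)).
      { apply Hr1. intros a Ha. destruct (Hv a Ha) as [[Hd Ho]|[H|[H Ho]]].
        - left; split; auto. intro; apply Ho; left; auto.
        - right; auto.
        - left; split; auto. }
      assert (N1' : forall a, In a q -> ~ r1 (atom_val th a)).
      { intros a Ha Hr. apply (N1 a); auto.
        apply (proj1 (Hb1 _ (Rs1 _ Hr))); auto. }
      assert (N2 : forall a, In a q0 -> ~ r2 (atom_val th a)).
      { apply Hr2. intros a Ha. destruct (Hv a Ha) as [[Hd Ho]|[H|[H Ho]]].
        - left; split; auto. intro; apply Ho; right; auto.
        - exfalso; eapply N1'; eauto.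
        - right; auto. }
      intros a Ha [H|[H _]]; [eapply N1|eapply N2]; eauto.
Qed.
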